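(* Suppose the geodesic metric space $X$ has the RBP with respect to pieces $\{X_i:i\in I\}$ and constant $M>0$. Let $C\ge 0$, $i\in I$, $x,y\in N_C(X_i)$, and let $\gamma$ be any geodesic from $x$ to $y$. Then $\gamma\subseteq N_{2M+2\max\{M,C\}}(X_i)$. In particular (taking $C=0$) each $X_i$ is $4M$-quasi-convex.
   Context: For $x\in X$ and $r>0$, $B(x;r)=\{z: d(x,z)<r\}$; $N_r(A)=\{z: d(z,A)\le r\}$. Relative bottleneck property (RBP): a geodesic metric space $X$ has the RBP with respect to a collection of subsets (''pieces'') $\{X_i:i\in I\}$ and a constant $M>0$ if $X=\bigcup_{i\in I}X_i$ and for all $i\neq j$ in $I$ there is a finite ordered set $I_{i,j}=\{i=i_0,i_1,\dots,i_s=j\}\subseteq I$ and, for each $r\in\{0,\dots,s-1\}$, a point $w_r\in X_{i_r}\cap X_{i_{r+1}}$ such that every path in $X$ from a point of $X_i$ to a point of $X_j$ meets $B(w_r;M)$. A subset $A$ is $k$-quasi-convex if every geodesic with endpoints in $A$ lies in $N_k(A)$. *)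

(* Defs.v *)
From Stdlib Require Export Reals List.
Open Scope R_scope.

Section Metric.
Context {X : Type} (d : X -> X -> R).

Definition is_metric : Prop :=
  (forall x y, 0 <= d x y) /\
  (forall x y, d x y = 0 <-> x = y) /\
  (forall x y, d x y = d y x) /\
  (forall x y z, d x z <= d x y + d y z).

Definition ball (x : X) (r : R) (z : X) : Prop := d x z < r.

(* d(z,A) <= r, with d(z,A) = inf_{a in A} d(z,a) (= +oo if A empty),
   written out: for every eps > 0 there is a in A with d(z,a) < r + eps. *)
Definition dist_set_le (A : X -> Prop) (z : X) (r : R) : Prop :=
  forall eps, 0 < eps -> exists a, A a /\ d z a < r + eps.

Definition nbhd (r : R) (A : X -> Prop) (z : X) : Prop := dist_set_le A z r.

(* a path: a continuous map [0,1] -> X (represented as R -> X, only its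
   values on [0,1] matter) *)
Definition is_path (p : R -> X) : Prop :=
  forall t, 0 <= t <= 1 -> forall eps, 0 < eps ->
    exists delta, 0 < delta /\
      forall s, 0 <= s <= 1 -> Rabs (s - t) < delta -> d (p s) (p t) < eps.

Definition is_geodesic (g : R -> X) (x y : X) : Prop :=
  g 0 = x /\ g (d x y) = y /\
  forall s t, 0 <= s <= d x y -> 0 <= t <= d x y ->
    d (g s) (g t) = Rabs (s - t).

Definition geod_in (g : R -> X) (x y : X) (S : X -> Prop) : Prop :=
  forall t, 0 <= t <= d x y -> S (g t).

Definition geodesic_space : Prop :=
  is_metric /\ forall x y, exists g, is_geodesic g x y.

Definition quasi_convex (k : R) (A : X -> Prop) : Prop :=
  forall x y g, A x -> A y -> is_geodesic g x y -> geod_in g x y (nbhd k A).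

(* Relative bottleneck property w.r.t. pieces P : I -> (X -> Prop) and M > 0.
   The finite ordered set I_{i,j} = {i_0,...,i_s} is a duplicate-free list l
   of length s+1 with i_0 = i, i_s = j; w r is the point w_r. *)
Definition RBP {I : Type} (P : I -> X -> Prop) (M : R) : Prop :=
  0 < M /\
  (forall z, exists i, P i z) /\
  forall i j, i <> j ->
    exists (l : list I) (w : nat -> X),
      NoDup l /\ (1 <= length l)%nat /\
      nth 0 l i = i /\ nth (length l - 1) l i = j /\
      forall r, (r < length l - 1)%nat ->
        P (nth r l i) (w r) /\ P (nth (S r) l i) (w r) /\
        forall p, is_path p -> P i (p 0) -> P j (p 1) ->
          exists t, 0 <= t <= 1 /\ ball (w r) M (p t).

End Metric.

(* Main.v *)
Require Import Defs.
From Stdlib Require Import Lra Lia Psatz Classical.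

Ltac rabsh H := unfold Rabs in H; repeat match type of H with context [Rcase_abs ?x] => destruct (Rcase_abs x) end.
Ltac rabs := unfold Rabs; repeat match goal with |- context [Rcase_abs ?x] => destruct (Rcase_abs x) end.

Lemma lip_path {X : Type} (d : X -> X -> R) (p : R -> X) K : 0 <= K ->
  (forall s t, 0<=s<=1 -> 0<=t<=1 -> d (p s) (p t) <= K * Rabs (s - t)) -> is_path d p.
Proof.
  intros HK H t Ht eps He. exists (eps/(K+1)). split.
  { apply Rdiv_lt_0_compat; lra. }
  intros s Hs Hst. eapply Rle_lt_trans. apply H; auto.
  set (q := eps/(K+1)) in *.
  assert (Hq : eps = q*(K+1)) by (unfold q; field; lra).
  assert (0 < q) by (unfold q; apply Rdiv_lt_0_compat; lra).
  assert (K * Rabs (s-t) <= K*q) by (apply Rmult_le_compat_l; lra).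
  nra.
Qed.

Definition pc {X : Type} (σ : R -> X) D (h : R -> X) T (t : R) : X :=
  if Rle_dec t (1/2) then σ (2*t*D) else h ((2*t-1)*T).

Lemma concat_lip {X : Type} (d : X -> X -> R) (Hm : is_metric d) σ D h T
  (HD : 0 <= D) (HT : 0 <= T)
  (Hs : forall a b, 0<=a<=D -> 0<=b<=D -> d (σ a) (σ b) = Rabs (a-b))
  (Hh : forall a b, 0<=a<=T -> 0<=b<=T -> d (h a) (h b) = Rabs (a-b))
  (Hj : σ D = h 0) :
  forall s t, 0<=s<=1 -> 0<=t<=1 -> d (pc σ D h T s) (pc σ D h T t) <= 2*(D+T) * Rabs (s-t).
Proof.
  destruct Hm as [Hpos [Hz [Hsym Htri]]].
  intros s t Hs0 Ht0; unfold pc; destruct (Rle_dec s (1/2)), (Rle_dec t (1/2)).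
  - rewrite Hs; [|split; nra|split; nra]. rabs; nra.
  - eapply Rle_trans. apply (Htri _ (σ D)). rewrite Hs by (split; nra). rewrite Hj, Hh by (split; nra).
    rabs; nra.
  - eapply Rle_trans. apply (Htri _ (σ D)). rewrite Hs by (split; nra). rewrite Hj, Hh by (split; nra).
    rabs; nra.
  - rewrite Hh; [|split; nra|split; nra]. rabs; nra.
Qed.

Lemma side {X : Type} (d : X -> X -> R) (Hm : is_metric d) (Pi Pj : X -> Prop) w0 M
  (Hb : forall p, is_path d p -> Pi (p 0) -> Pj (p 1) -> exists t, 0<=t<=1 /\ d w0 (p t) < M)
  σ D h T (HD : 0 <= D) (HT : 0 <= T)
  (Hs : forall a b, 0<=a<=D -> 0<=b<=D -> d (σ a) (σ b) = Rabs (a-b))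
  (Hh : forall a b, 0<=a<=T -> 0<=b<=T -> d (h a) (h b) = Rabs (a-b))
  (Hj : σ D = h 0) (H0 : Pi (σ 0)) (H1 : Pj (h T)) :
  (exists u, 0<=u<=D /\ d w0 (σ u) < M) \/ (exists v, 0<=v<=T /\ d w0 (h v) < M).
Proof.
  destruct (Hb (pc σ D h T)) as [t [Ht Hd]].
  - apply lip_path with (2*(D+T)); [lra|]. apply concat_lip; auto.
  - unfold pc; destruct Rle_dec; [replace (2*0*D) with 0 by ring; auto | lra].
  - unfold pc; destruct Rle_dec; [lra | replace ((2*1-1)*T) with T by ring; auto].
  - unfold pc in Hd; destruct Rle_dec.
    + left; exists (2*t*D); split; [split; nra|auto].
    + right; exists ((2*t-1)*T); split; [split; nra|auto].
Qed.

Lemma geo_iso {X : Type} (d : X -> X -> R) g x y : is_geodesic d g x y ->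
  forall a b, 0<=a<=d x y -> 0<=b<=d x y -> d (g a) (g b) = Rabs (a-b).
Proof. intros [_ [_ H]]; exact H. Qed.

Theorem lemma2p3 (X : Type) (d : X -> X -> R) (I : Type)
  (P : I -> X -> Prop) (M : R)
  (Hgeod : geodesic_space d) (Hrbp : RBP d P M) :
  (forall (C : R) (i : I) (x y : X) (g : R -> X),
     0 <= C -> nbhd d C (P i) x -> nbhd d C (P i) y ->
     is_geodesic d g x y ->
     geod_in d g x y (nbhd d (2 * M + 2 * Rmax M C) (P i)))
  /\ (forall i : I, quasi_convex d (4 * M) (P i)).
Proof.
  destruct Hgeod as [Hm Hgs].
  assert (Hm' := Hm). destruct Hm' as [Hpos [Hz [Hsym Htri]]].
  destruct Hrbp as [HM [Hcov Hbot]].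
  assert (main : forall (C : R) (i : I) (x y : X) (g : R -> X),
     0 <= C -> nbhd d C (P i) x -> nbhd d C (P i) y ->
     is_geodesic d g x y ->
     geod_in d g x y (nbhd d (2 * M + 2 * Rmax M C) (P i))).
  { intros C i x y g HC Hx Hy Hg t Ht eps Heps.
    pose proof (Rmax_l M C). pose proof (Rmax_r M C).
    destruct (Hcov (g t)) as [j Hj].
    destruct (classic (j = i)) as [<-|Hne].
    { exists (g t); split; auto. assert (d (g t) (g t) = 0) by (apply Hz; auto). lra. }
    destruct (Hx (eps/4)) as [x' [Px' Hdx]]; [lra|].
    destruct (Hy (eps/4)) as [y' [Py' Hdy]]; [lra|].
    pose proof (Hpos x' x) as Dx0. pose proof (Hpos y' y) as Dy0. destruct (Hgs x' x) as [sx Hsx]. destruct (Hgs y' y) as [sy Hsy].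
    destruct (Hbot i j (fun e => Hne (eq_sym e))) as [l [w [_ [Hl [Hl0 [Hl1 Hr]]]]]].
    assert (Hlen : (0 < length l - 1)%nat).
    { destruct (Nat.eq_dec (length l) 1) as [E|E]; [|lia].
      exfalso. rewrite E in Hl1. simpl in Hl1. rewrite Hl0 in Hl1. congruence. }
    destruct (Hr 0%nat Hlen) as [Pw [_ Hb]]. rewrite Hl0 in Pw.
    set (L := d x y) in *.
    destruct Hg as [Hg0 [HgL Hgi]]. fold L in HgL, Hgi.
    assert (HL0 : 0 <= L) by apply Hpos.
    assert (Hsx' := geo_iso _ _ _ _ Hsx). destruct Hsx as [Hsx0 [HsxD _]].
    assert (Hsy' := geo_iso _ _ _ _ Hsy). destruct Hsy as [Hsy0 [HsyD _]].
    assert (Hb' : forall p, is_path d p -> P i (p 0) -> P j (p 1) -> exists t, 0<=t<=1 /\ d (w 0%nat) (p t) < M).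
    { intros p Hp Hp0 Hp1. destruct (Hb p Hp Hp0 Hp1) as [t0 [? Hball]]. exists t0; split; [assumption|exact Hball]. }
    assert (Sx := side d Hm (P i) (P j) (w 0%nat) M Hb' sx (d x' x) g t ltac:(apply Hpos) ltac:(lra)
      Hsx' ltac:(intros a0 b0 Ha0 Hb0; apply Hgi; fold L; lra) ltac:(rewrite HsxD; auto) ltac:(rewrite Hsx0; auto) Hj).
    assert (Sy := side d Hm (P i) (P j) (w 0%nat) M Hb' sy (d y' y) (fun v => g (L - v)) (L - t)
      (Hpos y' y) ltac:(fold L; lra)
      Hsy' ltac:(intros a0 b0 Ha0 Hb0; simpl; rewrite Hgi by (fold L; lra); replace (L - a0 - (L - b0)) with (b0 - a0) by ring; rewrite Rabs_minus_sym; reflexivity)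
      ltac:(rewrite HsyD; simpl; replace (L-0) with L by ring; auto)
      ltac:(rewrite Hsy0; auto) ltac:(simpl; replace (L-(L-t)) with t by ring; auto)).
    exists (w 0%nat); split; auto.
    set (w0 := w 0%nat) in *.
    assert (Hgd : forall a b, 0<=a<=L -> 0<=b<=L -> a <= b -> d (g a) (g b) = b - a).
    { intros a b Ha Hb2 Hab. rewrite Hgi by auto. unfold Rabs; destruct Rcase_abs; lra. }
    rewrite Hsym in Hdx, Hdy.
    assert (Htz : d (g t) w0 = d w0 (g t)) by apply Hsym.
    destruct Sx as [[u [Hu Hdu]]|[v1 [Hv1 Hdv1]]];
    destruct Sy as [[u2 [Hu2 Hdu2]]|[v [Hv Hdv]]].
    -
      assert (d w0 x < M + d x' x).
      { pose proof (Htri w0 (sx u) (sx (d x' x))). rewrite Hsx' in H1 by (split; lra). rewrite HsxD in H1. rabsh H1; lra. }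
      assert (d w0 y < M + d y' y).
      { pose proof (Htri w0 (sy u2) (sy (d y' y))). rewrite Hsy' in H2 by (split; lra). rewrite HsyD in H2. rabsh H2; lra. }
      pose proof (Htri x w0 y). rewrite (Hsym x w0) in H3. fold L in H3.
      pose proof (Htri (g t) x w0). rewrite <- Hg0 in H4 at 1. rewrite (Hsym (g t) (g 0)), Hgd in H4 by lra.
      pose proof (Htri (g t) y w0). rewrite <- HgL in H5 at 1. rewrite Hgd in H5 by lra.
      pose proof (Hsym x w0); pose proof (Hsym y w0);  lra.
    -
      assert (d w0 x < M + d x' x).
      { pose proof (Htri w0 (sx u) (sx (d x' x))). rewrite Hsx' in H1 by (split; lra). rewrite HsxD in H1. rabsh H1; lra. }
      pose proof (Htri x w0 (g (L - v))). rewrite (Hsym x w0) in H2. rewrite <- Hg0 in H2 at 1.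
      rewrite Hgd in H2 by lra.
      pose proof (Htri (g t) x w0). rewrite <- Hg0 in H3 at 1. rewrite (Hsym (g t) (g 0)), Hgd in H3 by lra.
      pose proof (Htri (g t) (g (L - v)) w0). rewrite Hgd in H4 by lra. rewrite (Hsym _ w0) in H4.
      pose proof (Hsym x w0); pose proof (Hsym y w0); pose proof (Hsym (g (L - v)) w0); lra.
    -
      assert (d w0 y < M + d y' y).
      { pose proof (Htri w0 (sy u2) (sy (d y' y))). rewrite Hsy' in H1 by (split; lra). rewrite HsyD in H1. rabsh H1; lra. }
      pose proof (Htri (g v1) w0 y). rewrite (Hsym (g v1) w0) in H2. rewrite <- HgL in H2 at 1.
      rewrite Hgd in H2 by lra.
      pose proof (Htri (g t) y w0). rewrite <- HgL in H3 at 1. rewrite Hgd in H3 by lra.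
      pose proof (Htri (g t) (g v1) w0). rewrite (Hsym (g t) (g v1)), Hgd in H4 by lra.
      rewrite (Hsym _ w0) in H4. pose proof (Hsym x w0); pose proof (Hsym y w0); pose proof (Hsym (g v1) w0); lra.
    -
      pose proof (Htri (g v1) w0 (g (L - v))). rewrite (Hsym (g v1) w0), Hgd in H1 by lra.
      pose proof (Htri (g t) (g v1) w0). rewrite (Hsym (g t) (g v1)), Hgd in H2 by lra.
      rewrite (Hsym _ w0) in H2.
      pose proof (Htri (g t) (g (L - v)) w0). rewrite Hgd in H3 by lra. rewrite (Hsym _ w0) in H3.
      pose proof (Hsym x w0); pose proof (Hsym y w0); pose proof (Hsym (g v1) w0); pose proof (Hsym (g (L-v)) w0); lra. }
  split; [exact main|].
  intros i x y g Hx Hy Hg t Ht.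
  assert (Hn : forall z, P i z -> nbhd d 0 (P i) z).
  { intros z Hzz e He. exists z; split; auto. assert (d z z = 0) by (apply Hz; auto). lra. }
  pose proof (main 0 i x y g (Rle_refl 0) (Hn x Hx) (Hn y Hy) Hg t Ht) as H.
  rewrite Rmax_left in H by lra. replace (4*M) with (2*M+2*M) by ring. exact H.
Qed.
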